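(* Let $v_1\ge v_2>0$, $m\in\mathbb{Z}_{\ge1}$, $\alpha\in(0,1)$ and $0<b\le m$. If a strategy profile $(X,Y)$ with $\mathbf{E}(X)=m+\alpha$ and $\mathbf{E}(Y)=b$ is a Nash equilibrium of the discrete all-pay auction with valuations $v_1,v_2$, then $\frac{m(m+1)}{b}=\frac{v_1}{2}$, $(X,Y)$ is a Nash equilibrium of the General Lotto game $\Gamma(m+\alpha,b)$, and $Y=\left(1-\frac bm\right)\delta_0+\frac bmU_{\mathrm{E}}^m$.
   Context: Discrete all-pay auction: two players, 1 and 2, value a prize at $v_1$ and $v_2$ respectively, where $v_1\ge v_2>0$. A (mixed) strategy is a probability distribution on $\mathbb{Z}_{\ge 0}$ with finite mean, identified with a $\mathbb{Z}_{\ge0}$-valued random variable; the two players' choices are independent. If player 1 uses $X$ and player 2 uses $Y$, the expected payoffs are $P^1(X,Y)=v_1\Pr(X>Y)+\frac{v_1}{2}\Pr(X=Y)-\mathbf{E}(X)$ and $P^2(Y,X)=v_2\Pr(Y>X)+\frac{v_2}{2}\Pr(X=Y)-\mathbf{E}(Y)$. A Nash equilibrium of the all-pay auction is a pair $(X,Y)$ with $P^1(X,Y)\ge P^1(X',Y)$ and $P^2(Y,X)\ge P^2(Y',X)$ for all strategies $X',Y'$. $\delta_j$ denotes the point mass at $j$; $\lambda A+(1-\lambda)B$ denotes the mixture of distributions $A$ and $B$. Discrete General Lotto game: for reals $a,b\ge 0$, in $\Gamma(a,b)$ player 1 chooses a distribution $X$ on $\mathbb{Z}_{\ge0}$ with $\mathbf{E}(X)=a$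 and player 2 chooses a distribution $Y$ on $\mathbb{Z}_{\ge 0}$ with $\mathbf{E}(Y)=b$ (independently); the payoff to player 1 is $H(X,Y)=\Pr(X>Y)-\Pr(X<Y)$ and to player 2 is $H(Y,X)=-H(X,Y)$. A Nash equilibrium of $\Gamma(a,b)$ is a pair $(X,Y)$ from these strategy sets such that neither player can increase her payoff by switching to another strategy in her own strategy set. For $m\ge0$, $U_{\mathrm{E}}^m$ is the uniform distribution on $\{0,2,\dots,2m\}$. *)

(* Defs.v *)
From Stdlib Require Import Reals Lra.
From Coquelicot Require Import Coquelicot.
Open Scope R_scope.

Definition is_strategy (p : nat -> R) : Prop :=
  (forall n, 0 <= p n) /\ is_series p 1 /\ ex_series (fun n => INR n * p n).

Definition mean (p : nat -> R) : R := Series (fun n => INR n * p n).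

Definition cdf (q : nat -> R) (k : nat) : R := sum_n q k.

(* Pr(X > Y) for independent X ~ p, Y ~ q : sum_{i>=1} p i * Pr(Y <= i-1) *)
Definition PrGt (p q : nat -> R) : R :=
  Series (fun i => match i with O => 0 | S k => p i * cdf q k end).

Definition PrEq (p q : nat -> R) : R := Series (fun i => p i * q i).

Definition P1 (v1 : R) (p q : nat -> R) : R :=
  v1 * PrGt p q + v1 / 2 * PrEq p q - mean p.
Definition P2 (v2 : R) (q p : nat -> R) : R :=
  v2 * PrGt q p + v2 / 2 * PrEq p q - mean q.

Definition allpay_NE (v1 v2 : R) (p q : nat -> R) : Prop :=
  is_strategy p /\ is_strategy q /\
  (forall p', is_strategy p' -> P1 v1 p' q <= P1 v1 p q) /\
  (forall q', is_strategy q' -> P2 v2 q' p <= P2 v2 q p).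

Definition H (p q : nat -> R) : R := PrGt p q - PrGt q p.

Definition lotto_NE (a b : R) (p q : nat -> R) : Prop :=
  (is_strategy p /\ mean p = a) /\ (is_strategy q /\ mean q = b) /\
  (forall p', is_strategy p' -> mean p' = a -> H p' q <= H p q) /\
  (forall q', is_strategy q' -> mean q' = b -> H q' p <= H q p).

Definition delta (j : nat) (n : nat) : R := if Nat.eqb n j then 1 else 0.

Definition UE (m : nat) (n : nat) : R :=
  if andb (Nat.even n) (Nat.leb n (2 * m)) then / INR (m + 1) else 0.

(* Main.v *)
Require Import Defs.
From Stdlib Require Import Reals Lra Lia.
From Coquelicot Require Import Coquelicot.
Open Scope R_scope.

Lemma sumS (a : nat -> R) n : @eq R (sum_n a (S n)) (sum_n a n + a (S n)).
Proof. exact (@sum_Sn R_AbelianMonoid a n). Qed.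
Lemma sum0 (a : nat -> R) : @eq R (sum_n a 0) (a 0%nat).
Proof. exact (@sum_O R_AbelianMonoid a). Qed.

Lemma exs_plus (a b : nat -> R) : ex_series a -> ex_series b -> ex_series (fun n => a n + b n).
Proof. intros; apply (ex_series_plus a b); auto. Qed.
Lemma exs_scal (c : R) (a : nat -> R) : ex_series a -> ex_series (fun n => c * a n).
Proof. intros; apply (ex_series_scal c a); auto. Qed.
Lemma exs_scalr (c : R) (a : nat -> R) : ex_series a -> ex_series (fun n => a n * c).
Proof. intros; apply ex_series_scal_r; auto. Qed.
Lemma exs_minus (a b : nat -> R) : ex_series a -> ex_series b -> ex_series (fun n => a n - b n).
Proof. intros; apply (ex_series_minus a b); auto. Qed.
Lemma exs_le (a b : nat -> R) : (forall n, Rabs (a n) <= b n) -> ex_series b -> ex_series a.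
Proof. intros; apply (ex_series_le a b); auto. Qed.
Lemma exs_ext (a b : nat -> R) : (forall n, a n = b n) -> ex_series a -> ex_series b.
Proof. intros H [l Hl]. exists l. now apply (is_series_ext a b). Qed.

Lemma sum_stable (u : nat -> R) N : (forall n, (N < n)%nat -> u n = 0) ->
  forall k, @eq R (sum_n u (N + k)) (sum_n u N).
Proof. intros H k; induction k. now rewrite Nat.add_0_r.
  rewrite Nat.add_succ_r, sumS, IHk. rewrite H by lia. ring. Qed.

Lemma is_series_fin (u : nat -> R) N : (forall n, (N < n)%nat -> u n = 0) -> is_series u (sum_n u N).
Proof. intros H. assert (is_lim_seq (sum_n u) (sum_n u N)). { apply (is_lim_seq_ext_loc (fun _ => sum_n u N)).
  exists N. intros n Hn. replace n with (N + (n - N))%nat by lia. now rewrite sum_stable.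
  apply is_lim_seq_const. } exact H0. Qed.

Lemma ex_series_fin (u : nat -> R) N : (forall n, (N < n)%nat -> u n = 0) -> ex_series u.
Proof. intros H. eexists. exact (is_series_fin u N H). Qed.

Lemma Series_fin (u : nat -> R) N : (forall n, (N < n)%nat -> u n = 0) -> Series u = sum_n u N.
Proof. intros H. apply is_series_unique. now apply is_series_fin. Qed.

Lemma sum_point (u : nat -> R) k : (forall n, n <> k -> u n = 0) -> @eq R (sum_n u k) (u k).
Proof. intros H. destruct k. now rewrite sum0.
  rewrite sumS. assert (@eq R (sum_n u k) 0). { clear - H. assert (forall j, (j <= k)%nat -> @eq R (sum_n u j) 0).
  { induction j; intros. rewrite sum0; apply H; lia. rewrite sumS, IHj by lia. rewrite H by lia. ring. }
  apply H0; lia. } rewrite H0; ring. Qed.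

Lemma Series_point (u : nat -> R) k : (forall n, n <> k -> u n = 0) -> Series u = u k.
Proof. intros H. rewrite (Series_fin u k). now apply sum_point. intros; apply H; lia. Qed.

Lemma Series_ge_term (u : nat -> R) k : (forall n, 0 <= u n) -> ex_series u -> u k <= Series u.
Proof. intros H0 He.
  apply Rle_trans with (Series (fun n => if Nat.eqb n k then u k else 0)).
  rewrite (Series_point _ k). rewrite Nat.eqb_refl; lra.
  intros n Hn. destruct (Nat.eqb_spec n k); tauto.
  apply Series_le; auto. intros n. destruct (Nat.eqb_spec n k). subst; split; auto; lra. split; auto; lra. Qed.

Lemma Series_zero_terms (u : nat -> R) : (forall n, 0 <= u n) -> ex_series u -> Series u = 0 ->
  forall k, u k = 0.
Proof. intros H0 He Hs k. pose proof (Series_ge_term u k H0 He). specialize (H0 k). lra. Qed.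

Definition low (q : nat -> R) (k : nat) : R := match k with O => 0 | S k' => cdf q k' end.
Definition GG (q : nat -> R) (k : nat) : R := low q k + q k / 2.

Lemma cdf_S q k : cdf q (S k) = cdf q k + q (S k).
Proof. unfold cdf; apply sumS. Qed.
Lemma cdf_0 q : cdf q 0 = q 0%nat.
Proof. unfold cdf; apply sum0. Qed.
Lemma low_S q k : low q (S k) = low q k + q k.
Proof. destruct k; simpl. rewrite cdf_0; ring. rewrite cdf_S; ring. Qed.
Lemma low_cdf q k : low q k + q k = cdf q k.
Proof. destruct k; simpl. rewrite cdf_0; ring. rewrite cdf_S; ring. Qed.

Section S.
Variable q : nat -> R.
Hypothesis Hq : is_strategy q.

Lemma q_nonneg k : 0 <= q k.
Proof. destruct Hq as [H _]; auto. Qed.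
Lemma cdf_nonneg k : 0 <= cdf q k.
Proof. induction k. rewrite cdf_0; apply q_nonneg. rewrite cdf_S; pose proof (q_nonneg (S k)); lra. Qed.
Lemma cdf_mono k j : cdf q k <= cdf q (k + j).
Proof. induction j. rewrite Nat.add_0_r; lra. rewrite Nat.add_succ_r, cdf_S. pose proof (q_nonneg (S (k+j))); lra. Qed.
Lemma cdf_le1 k : cdf q k <= 1.
Proof. destruct Hq as [_ [H1 _]].
  assert (L : is_lim_seq (sum_n q) 1) by exact H1.
  assert (Rbar_le (cdf q k) 1).
  { apply (is_lim_seq_le_loc (fun _ => cdf q k) (sum_n q)); auto.
    exists k. intros n Hn. replace n with (k + (n-k))%nat by lia. apply cdf_mono.
    apply is_lim_seq_const. }
  exact H. Qed.
Lemma q_le1 k : q k <= 1.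
Proof. pose proof (low_cdf q k). pose proof (cdf_le1 k). destruct k; simpl in H.
  lra. pose proof (cdf_nonneg k); lra. Qed.
Lemma low_nonneg k : 0 <= low q k.
Proof. destruct k; simpl. lra. apply cdf_nonneg. Qed.
Lemma low_le1 k : low q k <= 1.
Proof. destruct k; simpl. lra. apply cdf_le1. Qed.
Lemma GG_nonneg k : 0 <= GG q k.
Proof. unfold GG. pose proof (low_nonneg k); pose proof (q_nonneg k); lra. Qed.
Lemma GG_le1 k : GG q k <= 1.
Proof. unfold GG. pose proof (low_cdf q k). pose proof (cdf_le1 k); pose proof (q_nonneg k); lra. Qed.
Lemma ex_q : ex_series q.
Proof. destruct Hq as [_ [H _]]. eexists; eauto. Qed.
Lemma Series_q : Series q = 1.
Proof. destruct Hq as [_ [H _]]. now apply is_series_unique. Qed.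
Lemma ex_mean : ex_series (fun n => INR n * q n).
Proof. destruct Hq as [_ [_ H]]. auto. Qed.

Lemma ex_bounded (f : nat -> R) : (forall n, 0 <= f n <= 1) -> ex_series (fun n => q n * f n).
Proof. intros Hf. apply exs_le with q. intros n. specialize (Hf n). pose proof (q_nonneg n).
  rewrite Rabs_right. nra. nra. apply ex_q. Qed.
End S.

Lemma PrGt_low p q : PrGt p q = Series (fun i => p i * low q i).
Proof. unfold PrGt. apply Series_ext. intros [|i]; simpl; ring. Qed.
Lemma PrEq_comm p q : PrEq p q = PrEq q p.
Proof. unfold PrEq. apply Series_ext. intros; ring. Qed.

Section T.
Variables p q : nat -> R.
Hypothesis Hp : is_strategy p.
Hypothesis Hq : is_strategy q.

Lemma ex_low : ex_series (fun i => p i * low q i).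
Proof. apply ex_bounded; auto. intros; split; [apply low_nonneg|apply low_le1]; auto. Qed.
Lemma ex_eq : ex_series (fun i => p i * q i).
Proof. apply ex_bounded; auto. intros; split; [apply q_nonneg|apply q_le1]; auto. Qed.
Lemma ex_GG : ex_series (fun i => p i * GG q i).
Proof. apply ex_bounded; auto. intros; split; [apply GG_nonneg|apply GG_le1]; auto. Qed.

Lemma Wform : PrGt p q + PrEq p q / 2 = Series (fun i => p i * GG q i).
Proof. rewrite PrGt_low. unfold PrEq, GG.
  unfold Rdiv. rewrite <- (Series_scal_r (/2)).
  rewrite <- Series_plus. apply Series_ext; intros; field.
  apply ex_low. apply exs_scalr, ex_eq. Qed.

Lemma partial_D n : sum_n (fun i => p i * low q i) n + sum_n (fun i => q i * low p i) n
   + sum_n (fun i => p i * q i) n = cdf p n * cdf q n.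
Proof. induction n.
  unfold cdf; rewrite !sum0; simpl; ring.
  unfold cdf in *. rewrite !sumS. simpl (low q (S n)); simpl (low p (S n)). unfold cdf. nra. Qed.
End T.

Lemma identD p q : is_strategy p -> is_strategy q -> PrGt p q + PrGt q p + PrEq p q = 1.
Proof. intros Hp Hq.
  rewrite !PrGt_low. unfold PrEq.
  assert (A : is_lim_seq (sum_n (fun i => p i * low q i)) (Series (fun i => p i * low q i))).
  { pose proof (Series_correct _ (ex_low p q Hp Hq)). exact H. }
  assert (B : is_lim_seq (sum_n (fun i => q i * low p i)) (Series (fun i => q i * low p i))).
  { pose proof (Series_correct _ (ex_low q p Hq Hp)). exact H. }
  assert (C : is_lim_seq (sum_n (fun i => p i * q i)) (Series (fun i => p i * q i))).
  { pose proof (Series_correct _ (ex_eq p q Hp Hq)). exact H. }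
  pose proof (is_lim_seq_plus' _ _ _ _ (is_lim_seq_plus' _ _ _ _ A B) C) as L.
  assert (P : is_lim_seq (sum_n p) 1) by (destruct Hp as [_ [H _]]; exact H).
  assert (Q : is_lim_seq (sum_n q) 1) by (destruct Hq as [_ [H _]]; exact H).
  pose proof (is_lim_seq_mult' _ _ _ _ P Q) as M.
  apply is_lim_seq_unique in L. apply is_lim_seq_unique in M.
  rewrite (Lim_seq_ext _ (fun n => sum_n p n * sum_n q n)) in L.
  rewrite L in M. injection M. intros; lra.
  intros n. apply (partial_D p q n). Qed.

Lemma P1_W v p q : is_strategy p -> is_strategy q ->
  P1 v p q = v * Series (fun i => p i * GG q i) - mean p.
Proof. intros Hp Hq. unfold P1. rewrite <- Wform by auto. lra. Qed.

Lemma P1_form v p q : is_strategy p -> is_strategy q ->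
  P1 v p q = Series (fun i => p i * (v * GG q i - INR i)).
Proof. intros Hp Hq. rewrite P1_W by auto. unfold mean.
  rewrite <- Series_scal_l, <- Series_minus. apply Series_ext; intros; ring.
  apply exs_scal, ex_GG; auto. apply ex_mean; auto. Qed.

Lemma P2_W v q p : is_strategy p -> is_strategy q ->
  P2 v q p = v * (1 - Series (fun i => p i * GG q i)) - mean q.
Proof. intros Hp Hq. unfold P2. rewrite <- Wform by auto.
  pose proof (identD q p Hq Hp). rewrite (PrEq_comm q p) in H.
  replace (PrGt q p) with (1 - PrGt p q - PrEq p q) by lra. field. Qed.

Lemma delta_strat k : is_strategy (delta k).
Proof. split; [|split].
  intros n; unfold delta; destruct (Nat.eqb n k); lra.
  replace 1 with (delta k k) by (unfold delta; now rewrite Nat.eqb_refl).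
  rewrite <- (sum_point (delta k) k). apply is_series_fin.
  intros; unfold delta; destruct (Nat.eqb_spec n k); [lia|auto].
  intros; unfold delta; destruct (Nat.eqb_spec n k); [lia|auto].
  apply ex_series_fin with k. intros; unfold delta; destruct (Nat.eqb_spec n k); [lia|ring]. Qed.

Lemma P1_delta v k q : is_strategy q -> P1 v (delta k) q = v * GG q k - INR k.
Proof. intros Hq. rewrite P1_form by (auto; apply delta_strat).
  rewrite (Series_point _ k). unfold delta; rewrite Nat.eqb_refl; ring.
  intros n Hn; unfold delta; destruct (Nat.eqb_spec n k); [lia|ring]. Qed.

Lemma P2_delta v k p : is_strategy p -> P2 v (delta k) p = v * GG p k - INR k.
Proof. intros Hp. unfold P2. rewrite (PrEq_comm p (delta k)).
  replace (v * PrGt (delta k) p + v / 2 * PrEq (delta k) p) with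
    (v * (PrGt (delta k) p + PrEq (delta k) p / 2)) by field.
  rewrite Wform by (auto; apply delta_strat).
  rewrite (Series_point _ k). unfold mean; rewrite (Series_point _ k).
  unfold delta; rewrite Nat.eqb_refl. ring.
  all: intros n Hn; unfold delta; destruct (Nat.eqb_spec n k); [lia|ring]. Qed.

Lemma ev2 j : Nat.even (2*j) = true.
Proof. apply Nat.even_spec; now exists j. Qed.
Lemma od2 j : Nat.odd (2*j) = false.
Proof. unfold Nat.odd; now rewrite ev2. Qed.
Lemma od21 j : Nat.odd (2*j+1) = true.
Proof. apply Nat.odd_spec; now exists j. Qed.
Lemma ev21 j : Nat.even (2*j+1) = false.
Proof. pose proof (od21 j). unfold Nat.odd in H. destruct (Nat.even (2*j+1)); auto. Qed.

Lemma parity i : exists j, (i = 2*j \/ i = 2*j+1)%nat.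
Proof. destruct (Nat.Even_or_Odd i) as [[j H]|[j H]]; exists j; lia. Qed.

Section X.
Variable m : nat.
Variable al : R.
Hypothesis Hm : (1 <= m)%nat.
Hypothesis Hal : 0 < al < 1.

Definition pi_ : R := (1 - al) / INR m + al / (INR m + 1).
Definition Xs (n : nat) : R :=
  if Nat.odd n then (if Nat.ltb n (2*m) then pi_ else if Nat.eqb n (2*m+1) then al / (INR m + 1) else 0) else 0.

Lemma INRm_pos : 1 <= INR m.
Proof. apply (le_INR 1). lia. Qed.

Lemma pi_pos : 0 < pi_.
Proof. unfold pi_. pose proof INRm_pos. assert (0 < (1-al)/INR m) by (apply Rdiv_lt_0_compat; lra).
  assert (0 < al/(INR m + 1)) by (apply Rdiv_lt_0_compat; lra). lra. Qed.

Lemma Xs_even j : Xs (2*j) = 0.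
Proof. unfold Xs. now rewrite od2. Qed.
Lemma Xs_odd_lt j : (j < m)%nat -> Xs (2*j+1) = pi_.
Proof. intros. unfold Xs. rewrite od21. destruct (Nat.ltb_spec (2*j+1) (2*m)); auto. lia. Qed.
Lemma Xs_odd_m : Xs (2*m+1) = al / (INR m + 1).
Proof. unfold Xs. rewrite od21. destruct (Nat.ltb_spec (2*m+1) (2*m)). lia. now rewrite Nat.eqb_refl. Qed.
Lemma Xs_big n : (2*m+1 < n)%nat -> Xs n = 0.
Proof. intros. unfold Xs. destruct (Nat.odd n); auto. destruct (Nat.ltb_spec n (2*m)). lia.
  destruct (Nat.eqb_spec n (2*m+1)). lia. auto. Qed.

Lemma Xs_nonneg n : 0 <= Xs n.
Proof. unfold Xs. pose proof pi_pos. pose proof INRm_pos.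
  assert (0 < al/(INR m + 1)) by (apply Rdiv_lt_0_compat; lra).
  destruct (Nat.odd n); [|lra]. destruct (Nat.ltb n (2*m)); [lra|]. destruct (Nat.eqb n (2*m+1)); lra. Qed.

Lemma cdf_Xs j : (j <= m)%nat -> cdf Xs (2*j) = INR j * pi_ /\ ((j < m)%nat -> cdf Xs (2*j+1) = INR (S j) * pi_).
Proof. induction j; intros Hj.
  - split. simpl. rewrite cdf_0. replace 0%nat with (2*0)%nat by lia. rewrite Xs_even. simpl; ring.
    intros. replace (2*0+1)%nat with (S 0) by lia. rewrite cdf_S, cdf_0.
    replace 0%nat with (2*0)%nat at 1 by lia. rewrite Xs_even.
    replace (S 0) with (2*0+1)%nat by lia. rewrite Xs_odd_lt by lia. simpl; ring.
  - destruct IHj as [_ IH2]. lia. specialize (IH2 ltac:(lia)).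
    assert (E : cdf Xs (2 * S j) = INR (S j) * pi_).
    { replace (2 * S j)%nat with (S (2*j+1)) by lia. rewrite cdf_S, IH2.
      replace (S (2*j+1)) with (2*(S j))%nat by lia. rewrite Xs_even. ring. }
    split; auto. intros. replace (2 * S j + 1)%nat with (S (2 * S j)) by lia.
    rewrite cdf_S, E. replace (S (2 * S j)) with (2 * S j + 1)%nat by lia.
    rewrite Xs_odd_lt by lia. rewrite !S_INR. ring. Qed.

Lemma cdf_Xs_top : cdf Xs (2*m+1) = 1.
Proof. replace (2*m+1)%nat with (S (2*m)) by lia. rewrite cdf_S.
  destruct (cdf_Xs m (le_n m)) as [E _]. rewrite E.
  replace (S (2*m)) with (2*m+1)%nat by lia. rewrite Xs_odd_m. unfold pi_.
  pose proof INRm_pos. field. lra. Qed.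

Lemma cdf_Xs_big k : (2*m+1 <= k)%nat -> cdf Xs k = 1.
Proof. intros. replace k with (2*m+1 + (k - (2*m+1)))%nat by lia. unfold cdf.
  rewrite sum_stable. apply cdf_Xs_top. apply Xs_big. Qed.

Lemma Xs_strat : is_strategy Xs.
Proof. split; [|split]. apply Xs_nonneg.
  rewrite <- cdf_Xs_top. apply is_series_fin. apply Xs_big.
  apply ex_series_fin with (2*m+1)%nat. intros; rewrite Xs_big; auto; ring. Qed.

Lemma mean_Xs_part j : (j <= m)%nat -> @eq R (sum_n (fun n => INR n * Xs n) (2*j)) (INR j * INR j * pi_) /\
   ((j < m)%nat -> @eq R (sum_n (fun n => INR n * Xs n) (2*j+1)) (INR (S j) * INR (S j) * pi_)).
Proof. induction j; intros Hj.
  - split. simpl. rewrite sum0. simpl; ring.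
    intros. replace (2*0+1)%nat with (S 0) by lia. rewrite sumS, sum0.
    replace (S 0) with (2*0+1)%nat by lia. rewrite Xs_odd_lt by lia. simpl; ring.
  - destruct IHj as [_ IH2]. lia. specialize (IH2 ltac:(lia)).
    assert (E : @eq R (sum_n (fun n => INR n * Xs n) (2 * S j)) (INR (S j) * INR (S j) * pi_)).
    { replace (2 * S j)%nat with (S (2*j+1)) by lia. rewrite sumS, IH2.
      replace (S (2*j+1)) with (2*(S j))%nat by lia. rewrite Xs_even. ring. }
    split; auto. intros. replace (2 * S j + 1)%nat with (S (2 * S j)) by lia.
    rewrite sumS, E. replace (S (2 * S j)) with (2 * S j + 1)%nat by lia.
    rewrite Xs_odd_lt by lia. rewrite plus_INR, mult_INR, !S_INR. simpl. ring. Qed.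

Lemma mean_Xs : mean Xs = INR m + al.
Proof. unfold mean. rewrite (Series_fin _ (2*m+1)).
  replace (2*m+1)%nat with (S (2*m)) by lia. rewrite sumS.
  destruct (mean_Xs_part m (le_n m)) as [E _]. rewrite E.
  replace (S (2*m)) with (2*m+1)%nat by lia. rewrite Xs_odd_m. unfold pi_.
  rewrite plus_INR, mult_INR. simpl. pose proof INRm_pos. field. lra.
  intros; rewrite Xs_big; auto; ring. Qed.

Lemma GG_Xs i : GG Xs i <= INR i * pi_ / 2 /\ ((2*m+1 <= i)%nat -> GG Xs i < INR i * pi_ / 2).
Proof. pose proof pi_pos. pose proof INRm_pos.
  assert (Big : forall i, (2*m+2 <= i)%nat -> 1 < INR i * pi_ / 2).
  { intros k Hk. apply le_INR in Hk. rewrite plus_INR, mult_INR in Hk. simpl in Hk.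
    assert (1 < (INR m + 1) * pi_).
    { unfold pi_. replace ((INR m + 1) * ((1 - al) / INR m + al / (INR m + 1))) with
        (1 + (1 - al) / INR m) by (field; lra).
      assert (0 < (1-al)/INR m) by (apply Rdiv_lt_0_compat; lra). lra. }
    nra. }
  assert (GGle1 := GG_le1 Xs Xs_strat i).
  destruct (Compare_dec.le_lt_dec (2*m+1) i) as [Hi|Hi].
  - destruct (Nat.eq_dec i (2*m+1)) as [->|Hne].
    + unfold GG. replace (2*m+1)%nat with (S (2*m)) by lia. change (low Xs (S (2*m))) with (cdf Xs (2*m)).
      destruct (cdf_Xs m (le_n m)) as [E _]. rewrite E.
      replace (S (2*m)) with (2*m+1)%nat by lia. rewrite Xs_odd_m.
      assert (L : INR (2*m+1) * pi_ / 2 - (INR m * pi_ + al / (INR m + 1) / 2) > 0).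
      { rewrite plus_INR, mult_INR; simpl. unfold pi_.
        apply (Rmult_gt_reg_l (2 * INR m * (INR m + 1))). nra. field_simplify; try lra. nra. }
      split; intros; lra.
    + specialize (Big i ltac:(lia)). split; intros; lra.
  - split; [|intros; lia].
    destruct (parity i) as [j [Hj|Hj]]; subst i.
    + destruct j. simpl. unfold GG; simpl. replace 0%nat with (2*0)%nat by lia. rewrite Xs_even. lra.
      unfold GG. replace (2 * S j)%nat with (S (2*j+1)) by lia. change (low Xs (S (2*j+1))) with (cdf Xs (2*j+1)).
      destruct (cdf_Xs j ltac:(lia)) as [_ E]. rewrite E by lia.
      replace (S (2*j+1)) with (2*S j)%nat by lia. rewrite Xs_even. rewrite mult_INR. simpl. lra.
    + unfold GG. destruct j. simpl. rewrite cdf_0. replace 1%nat with (2*0+1)%nat by lia.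
      replace 0%nat with (2*0)%nat by lia. rewrite Xs_even, Xs_odd_lt by lia. simpl. lra.
      replace (2 * S j + 1)%nat with (S (2 * S j)) by lia. change (low Xs (S (2*S j))) with (cdf Xs (2*S j)).
      destruct (cdf_Xs (S j) ltac:(lia)) as [E _]. rewrite E.
      replace (S (2*S j)) with (2*S j+1)%nat by lia. rewrite Xs_odd_lt by lia.
      rewrite plus_INR, mult_INR. simpl. lra. Qed.
End X.

Section Y.
Variable m : nat.
Variable b : R.
Hypothesis Hm : (1 <= m)%nat.
Hypothesis Hb : 0 < b <= INR m.

Definition cc : R := b / (INR m * (INR m + 1)).
Definition y0 : R := 1 - b / INR m + cc.
Definition Ys (n : nat) : R :=
  if Nat.eqb n 0 then y0 else if andb (Nat.even n) (Nat.leb n (2*m)) then cc else 0.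

Lemma Im1 : 1 <= INR m.
Proof. apply (le_INR 1). lia. Qed.
Lemma cc_pos : 0 < cc.
Proof. unfold cc. pose proof Im1. apply Rdiv_lt_0_compat; nra. Qed.
Lemma y0_ge : cc <= y0.
Proof. unfold y0. pose proof Im1. assert (b / INR m <= 1).
  { apply (Rmult_le_reg_r (INR m)). lra. field_simplify; lra. } lra. Qed.
Lemma y0_top : y0 + INR m * cc = 1.
Proof. unfold y0, cc. pose proof Im1. field. lra. Qed.

Lemma Ys_0 : Ys 0 = y0.
Proof. reflexivity. Qed.
Lemma Ys_even j : (1 <= j <= m)%nat -> Ys (2*j) = cc.
Proof. intros. unfold Ys. destruct (Nat.eqb_spec (2*j) 0). lia. rewrite ev2.
  destruct (Nat.leb_spec (2*j) (2*m)). auto. lia. Qed.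
Lemma Ys_odd j : Ys (2*j+1) = 0.
Proof. unfold Ys. destruct (Nat.eqb_spec (2*j+1) 0). lia. now rewrite ev21. Qed.
Lemma Ys_big n : (2*m < n)%nat -> Ys n = 0.
Proof. intros. unfold Ys. destruct (Nat.eqb_spec n 0). lia.
  destruct (Nat.leb_spec n (2*m)). lia. now rewrite Bool.andb_false_r. Qed.
Lemma Ys_nonneg n : 0 <= Ys n.
Proof. unfold Ys. pose proof cc_pos. pose proof y0_ge.
  destruct (Nat.eqb n 0). lra. destruct (andb _ _); lra. Qed.

Lemma cdf_Ys j : (j <= m)%nat -> cdf Ys (2*j) = y0 + INR j * cc /\ cdf Ys (2*j+1) = y0 + INR j * cc.
Proof. induction j; intros Hj.
  - simpl. rewrite cdf_S, cdf_0. change (Ys 1) with (Ys (2*0+1)). rewrite Ys_odd, Ys_0. split; ring.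
  - destruct IHj as [_ IH2]. lia.
    assert (E : cdf Ys (2 * S j) = y0 + INR (S j) * cc).
    { replace (2 * S j)%nat with (S (2*j+1)) by lia. rewrite cdf_S, IH2.
      replace (S (2*j+1)) with (2*(S j))%nat by lia. rewrite Ys_even by lia. rewrite S_INR. ring. }
    split; auto. replace (2 * S j + 1)%nat with (S (2 * S j)) by lia.
    rewrite cdf_S, E. replace (S (2 * S j)) with (2 * S j + 1)%nat by lia.
    rewrite Ys_odd. ring. Qed.

Lemma cdf_Ys_top : cdf Ys (2*m) = 1.
Proof. destruct (cdf_Ys m (le_n m)) as [E _]. rewrite E. apply y0_top. Qed.

Lemma Ys_strat : is_strategy Ys.
Proof. split; [|split]. apply Ys_nonneg.
  rewrite <- cdf_Ys_top. apply is_series_fin. apply Ys_big.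
  apply ex_series_fin with (2*m)%nat. intros; rewrite Ys_big; auto; ring. Qed.

Lemma mean_Ys_part j : (j <= m)%nat ->
  @eq R (sum_n (fun n => INR n * Ys n) (2*j)) (INR j * (INR j + 1) * cc) /\
  @eq R (sum_n (fun n => INR n * Ys n) (2*j+1)) (INR j * (INR j + 1) * cc).
Proof. induction j; intros Hj.
  - simpl. rewrite sumS, sum0. change (Ys 1) with (Ys (2*0+1)). rewrite Ys_odd. simpl; split; ring.
  - destruct IHj as [_ IH2]. lia.
    assert (E : @eq R (sum_n (fun n => INR n * Ys n) (2 * S j)) (INR (S j) * (INR (S j) + 1) * cc)).
    { replace (2 * S j)%nat with (S (2*j+1)) by lia. rewrite sumS, IH2.
      replace (S (2*j+1)) with (2*(S j))%nat by lia. rewrite Ys_even by lia.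
      rewrite mult_INR, (S_INR j). replace (INR 2) with 2 by (simpl; ring). ring. }
    split; auto. replace (2 * S j + 1)%nat with (S (2 * S j)) by lia.
    rewrite sumS, E. replace (S (2 * S j)) with (2 * S j + 1)%nat by lia.
    rewrite Ys_odd. ring. Qed.

Lemma mean_Ys : mean Ys = b.
Proof. unfold mean. rewrite (Series_fin _ (2*m)).
  destruct (mean_Ys_part m (le_n m)) as [E _]. rewrite E. unfold cc. pose proof Im1. field. lra.
  intros; rewrite Ys_big; auto; ring. Qed.

Lemma GG_Ys i : GG Ys i <= (y0 - cc/2) + cc/2 * INR i.
Proof. pose proof cc_pos. pose proof y0_ge. pose proof y0_top. pose proof Im1.
  assert (GGle1 := GG_le1 Ys Ys_strat i).
  destruct (Compare_dec.le_lt_dec (2*m+1) i) as [Hi|Hi].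
  - apply le_INR in Hi. rewrite plus_INR, mult_INR in Hi. simpl in Hi. nra.
  - destruct (parity i) as [j [Hj|Hj]]; subst i.
    + destruct j. unfold GG; simpl. rewrite Ys_0. lra.
      unfold GG. replace (2 * S j)%nat with (S (2*j+1)) by lia.
      change (low Ys (S (2*j+1))) with (cdf Ys (2*j+1)).
      destruct (cdf_Ys j ltac:(lia)) as [_ E]. rewrite E.
      replace (S (2*j+1)) with (2*S j)%nat by lia. rewrite Ys_even by lia.
      rewrite mult_INR, (S_INR j). replace (INR 2) with 2 by (simpl; ring). nra.
    + unfold GG. destruct j. simpl. rewrite cdf_0. change (Ys 1) with (Ys (2*0+1)). rewrite Ys_odd, Ys_0. simpl. lra.
      replace (2 * S j + 1)%nat with (S (2 * S j)) by lia.
      change (low Ys (S (2*S j))) with (cdf Ys (2*S j)).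
      destruct (cdf_Ys (S j) ltac:(lia)) as [E _]. rewrite E.
      replace (S (2*S j)) with (2*S j+1)%nat by lia. rewrite Ys_odd.
      rewrite plus_INR, mult_INR. simpl. lra. Qed.
End Y.

Lemma lotto_part v1 v2 a b p q : 0 < v2 -> v2 <= v1 -> mean p = a -> mean q = b ->
  allpay_NE v1 v2 p q -> lotto_NE a b p q.
Proof. intros Hv2 Hv Hmp Hmq [Hp [Hq [D1 D2]]].
  split; [split; auto|split; [split; auto|split]].
  - intros p' Hp' Hm'. specialize (D1 p' Hp'). unfold P1 in D1. unfold H.
    pose proof (identD p' q Hp' Hq) as I1. pose proof (identD p q Hp Hq) as I2.
    assert (K : v1 * (PrGt p' q + PrEq p' q / 2) <= v1 * (PrGt p q + PrEq p q / 2)).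
    { rewrite Hm', <- Hmp in D1. lra. }
    apply Rmult_le_reg_l in K; lra.
  - intros q' Hq' Hm'. specialize (D2 q' Hq'). unfold P2 in D2. unfold H.
    pose proof (identD q' p Hq' Hp) as I1. pose proof (identD q p Hq Hp) as I2.
    rewrite (PrEq_comm q' p) in I1. rewrite (PrEq_comm q p) in I2.
    assert (K : v2 * (PrGt q' p + PrEq p q' / 2) <= v2 * (PrGt q p + PrEq p q / 2)).
    { rewrite Hm', <- Hmq in D2. lra. }
    apply Rmult_le_reg_l in K; lra.
Qed.

Section Core.
Variables (v1 v2 : R) (m : nat) (al b : R) (p q : nat -> R).
Hypotheses (Hv : v2 <= v1) (Hv2 : 0 < v2) (Hm : (1 <= m)%nat) (Hal : 0 < al < 1) (Hb : 0 < b <= INR m)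
  (Hmp : mean p = INR m + al) (Hmq : mean q = b) (NE : allpay_NE v1 v2 p q).

Let Hp : is_strategy p. Proof. apply NE. Qed.
Let Hq : is_strategy q. Proof. apply NE. Qed.
Let D1 : forall p', is_strategy p' -> P1 v1 p' q <= P1 v1 p q. Proof. apply NE. Qed.
Let D2 : forall q', is_strategy q' -> P2 v2 q' p <= P2 v2 q p. Proof. apply NE. Qed.

Definition gg k := v1 * GG q k - INR k.

Lemma gA k : gg k <= P1 v1 p q.
Proof. unfold gg. rewrite <- P1_delta by exact Hq. apply D1, delta_strat. Qed.

Let Xst := Xs_strat m al Hm Hal.
Let Yst := Ys_strat m b Hm Hb.

Lemma chain : P1 v1 (Xs m al) q = P1 v1 p q /\
  Series (fun i => q i * GG (Xs m al) i) = b * pi_ m al / 2.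
Proof.
  pose proof (pi_pos m al Hm Hal) as Hpi.
  set (W := Series (fun i => p i * GG q i)).
  set (W' := Series (fun i => Xs m al i * GG q i)).
  set (Z := Series (fun i => q i * GG (Xs m al) i)).
  set (WY := Series (fun i => p i * GG (Ys m b) i)).
  assert (EM1 : P1 v1 p q = v1 * W - (INR m + al)) by (rewrite P1_W by auto; now rewrite Hmp).
  assert (EX : P1 v1 (Xs m al) q = v1 * W' - (INR m + al)) by (rewrite P1_W by auto; now rewrite mean_Xs).
  assert (B : P1 v1 (Xs m al) q <= P1 v1 p q) by (apply D1; auto).
  assert (G : W' + Z = 1).
  { unfold W', Z. rewrite <- !Wform by auto. pose proof (identD (Xs m al) q Xst Hq).
    rewrite (PrEq_comm q). lra. }
  assert (Zle : Z <= b * pi_ m al / 2).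
  { unfold Z. apply Rle_trans with (Series (fun n => INR n * q n * (pi_ m al / 2))).
    apply Series_le. intros n. split. apply Rmult_le_pos. apply q_nonneg; auto. apply GG_nonneg; auto.
    destruct (GG_Xs m al Hm Hal n) as [K _]. pose proof (q_nonneg q Hq n). nra.
    apply exs_scalr, ex_mean; auto.
    rewrite Series_scal_r. change (Series (fun n => INR n * q n)) with (mean q). rewrite Hmq. lra. }
  assert (C : P2 v2 (Ys m b) p <= P2 v2 q p) by (apply D2; auto).
  rewrite !P2_W in C by auto. rewrite mean_Ys, Hmq in C by auto.
  fold W WY in C.
  assert (WWY : W <= WY).
  { assert (v2 * (1 - WY) <= v2 * (1 - W)) by lra. apply Rmult_le_reg_l in H; lra. }
  assert (WYle : WY <= (y0 m b - cc m b / 2) + cc m b / 2 * (INR m + al)).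
  { unfold WY. apply Rle_trans with (Series (fun n => p n * (y0 m b - cc m b / 2) + cc m b / 2 * (INR n * p n))).
    apply Series_le. intros n. split. apply Rmult_le_pos. apply q_nonneg; auto. apply GG_nonneg; auto.
    pose proof (GG_Ys m b Hm Hb n). pose proof (q_nonneg p Hp n). nra.
    apply exs_plus. apply exs_scalr, ex_q; auto. apply exs_scal, ex_mean; auto.
    rewrite Series_plus, Series_scal_r, Series_scal_l. change (Series (fun n => INR n * p n)) with (mean p).
    rewrite Hmp, (Series_q p Hp). lra.
    apply exs_scalr, ex_q; auto. apply exs_scal, ex_mean; auto. }
  assert (ALG : (y0 m b - cc m b / 2) + cc m b / 2 * (INR m + al) = 1 - b * pi_ m al / 2).
  { unfold y0, cc, pi_. pose proof (Im1 m Hm). field. lra. }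
  assert (v1pos : 0 < v1) by lra.
  assert (W'W : W' <= W). { rewrite EX, EM1 in B. apply Rmult_le_reg_l with v1; lra. }
  split. rewrite EX, EM1. assert (W' = W) by lra. rewrite H; ring. lra.
Qed.

Lemma q_big n : (2*m+1 <= n)%nat -> q n = 0.
Proof. intros Hn. destruct chain as [_ Z].
  pose proof (pi_pos m al Hm Hal) as Hpi.
  set (u := fun i => q i * (INR i * pi_ m al / 2 - GG (Xs m al) i)).
  assert (Hu : forall i, 0 <= u i).
  { intros i. unfold u. apply Rmult_le_pos. apply q_nonneg; auto.
    destruct (GG_Xs m al Hm Hal i). lra. }
  assert (Eu : forall i, u i = INR i * q i * (pi_ m al / 2) - q i * GG (Xs m al) i).
  { intros; unfold u; field. }
  assert (Ex : ex_series u).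
  { apply exs_ext with (fun i => INR i * q i * (pi_ m al / 2) - q i * GG (Xs m al) i).
    intros; now rewrite Eu. apply exs_minus. apply exs_scalr, ex_mean; auto. apply ex_GG; auto. }
  assert (S0 : Series u = 0).
  { rewrite (Series_ext _ _ Eu). rewrite Series_minus, Series_scal_r, Z.
    change (Series (fun n => INR n * q n)) with (mean q). rewrite Hmq. field.
    apply exs_scalr, ex_mean; auto. apply ex_GG; auto. }
  pose proof (Series_zero_terms u Hu Ex S0 n) as K. unfold u in K.
  destruct (GG_Xs m al Hm Hal n) as [_ K2]. specialize (K2 Hn).
  apply Rmult_integral in K. destruct K; auto. lra. Qed.

Lemma Xs_pos_odd j : (j <= m)%nat -> 0 < Xs m al (2*j+1).
Proof. intros. pose proof (pi_pos m al Hm Hal). destruct (Nat.eq_dec j m) as [->|].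
  rewrite Xs_odd_m by auto. pose proof (Im1 m Hm). apply Rdiv_lt_0_compat; lra.
  rewrite Xs_odd_lt; auto; lia. Qed.

Lemma g_odd j : (j <= m)%nat -> gg (2*j+1) = P1 v1 p q.
Proof. intros Hj. destruct chain as [C _].
  set (M := P1 v1 p q).
  set (u := fun i => Xs m al i * (M - gg i)).
  assert (Hu : forall i, 0 <= u i).
  { intros i. unfold u. apply Rmult_le_pos. apply Xs_nonneg; auto. pose proof (gA i). unfold M; lra. }
  assert (Eu : forall i, u i = Xs m al i * M - (v1 * (Xs m al i * GG q i) - INR i * Xs m al i)).
  { intros; unfold u, gg; ring. }
  assert (Ex1 : ex_series (fun i => v1 * (Xs m al i * GG q i) - INR i * Xs m al i)).
  { apply exs_minus. apply exs_scal, ex_GG; auto. apply ex_mean; auto. }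
  assert (Ex : ex_series u).
  { apply exs_ext with (fun i => Xs m al i * M - (v1 * (Xs m al i * GG q i) - INR i * Xs m al i)).
    intros; now rewrite Eu. apply exs_minus. apply exs_scalr, ex_q; auto. auto. }
  assert (S0 : Series u = 0).
  { rewrite (Series_ext _ _ Eu). rewrite Series_minus, Series_scal_r, (Series_q _ Xst).
    rewrite (Series_ext _ (fun i => Xs m al i * (v1 * GG q i - INR i))), <- P1_form; auto.
    unfold M in *. rewrite C. ring. intros; ring.
    apply exs_scalr, ex_q; auto. auto. }
  pose proof (Series_zero_terms u Hu Ex S0 (2*j+1)) as K. unfold u in K.
  pose proof (Xs_pos_odd j Hj).
  apply Rmult_integral in K. destruct K. lra. unfold M in *. lra. Qed.

Lemma GG_S k : GG q (S k) = GG q k + (q k + q (S k)) / 2.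
Proof. unfold GG. rewrite low_S. field. Qed.

Lemma step_rel j : (j < m)%nat ->
  v1 * (q (2*j+1) + 2 * q (2*j+2) + q (2*j+3)) / 2 = 2 /\ v1 * (q (2*j+1) + q (2*j+2)) / 2 <= 1.
Proof. intros Hj. pose proof (g_odd j ltac:(lia)) as E1. pose proof (g_odd (S j) ltac:(lia)) as E3.
  pose proof (gA (2*j+2)) as E2. unfold gg in *.
  replace (2 * S j + 1)%nat with (S (S (2*j+1))) in E3 by lia.
  replace (2*j+2)%nat with (S (2*j+1)) in * by lia. replace (2*j+3)%nat with (S (S (2*j+1))) by lia.
  rewrite !GG_S in E3. rewrite GG_S in E2. rewrite !S_INR in *. split; lra. Qed.

Lemma q_odd_le j : (j < m)%nat -> q (2*j+1) <= q (2*j+3).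
Proof. intros Hj. destruct (step_rel j Hj) as [A B].
  assert (0 < v1) by lra. assert (v1 * q (2*j+1) <= v1 * q (2*j+3)) by lra.
  apply Rmult_le_reg_l in H0; lra. Qed.

Lemma q_odd_zero j : (j <= m)%nat -> q (2*j+1) = 0.
Proof. intros Hj.
  assert (K : forall t, (t <= m)%nat -> q (2*(m-t)+1) = 0).
  { induction t; intros Ht. replace (m-0)%nat with m by lia. apply q_big. lia.
    pose proof (q_odd_le (m - S t) ltac:(lia)). replace (2*(m - S t)+3)%nat with (2*(m-t)+1)%nat in H by lia.
    rewrite IHt in H by lia. pose proof (q_nonneg q Hq (2*(m - S t)+1)). lra. }
  replace j with (m - (m - j))%nat by lia. apply K. lia. Qed.

Lemma q_even_val j : (j < m)%nat -> q (2*j+2) = 2 / v1.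
Proof. intros Hj. destruct (step_rel j Hj) as [A _]. rewrite q_odd_zero in A by lia.
  replace (2*j+3)%nat with (2*(S j)+1)%nat in A by lia. rewrite q_odd_zero in A by lia.
  assert (0 < v1) by lra. field_simplify in A; try lra. apply (Rmult_eq_reg_l v1); [|lra]. field_simplify; lra. Qed.

Lemma q_sum_part j : (j <= m)%nat -> @eq R (sum_n q (2*j)) (q 0%nat + INR j * (2 / v1)).
Proof. induction j; intros Hj. simpl. rewrite sum0. ring.
  replace (2 * S j)%nat with (S (S (2*j))) by lia. rewrite !sumS, IHj by lia.
  replace (S (2*j)) with (2*j+1)%nat by lia. rewrite q_odd_zero by lia.
  replace (S (2*j+1)) with (2*j+2)%nat by lia. rewrite q_even_val by lia. rewrite S_INR. field. lra. Qed.

Lemma q_mean_part j : (j <= m)%nat ->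
  @eq R (sum_n (fun n => INR n * q n) (2*j)) (INR j * (INR j + 1) * (2 / v1)).
Proof. induction j; intros Hj. simpl. rewrite sum0. simpl; ring.
  replace (2 * S j)%nat with (S (S (2*j))) by lia. rewrite !sumS, IHj by lia.
  replace (S (2*j)) with (2*j+1)%nat by lia. rewrite q_odd_zero by lia.
  replace (S (2*j+1)) with (2*j+2)%nat by lia. rewrite q_even_val by lia.
  replace (INR (2*j+2)) with (2 * INR j + 2) by (rewrite plus_INR, mult_INR; simpl; ring).
  rewrite (S_INR j). field. lra. Qed.

Lemma q_zero_beyond n : (2*m < n)%nat -> q n = 0.
Proof. intros; apply q_big; lia. Qed.

Lemma q0_val : q 0%nat = 1 - INR m * (2 / v1).
Proof. pose proof (Series_q q Hq). rewrite (Series_fin q (2*m)) in H by apply q_zero_beyond.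
  rewrite q_sum_part in H by lia. lra. Qed.

Lemma b_val : b = INR m * (INR m + 1) * (2 / v1).
Proof. rewrite <- Hmq. unfold mean. rewrite (Series_fin _ (2*m)).
  apply q_mean_part; lia. intros; rewrite q_zero_beyond; auto; ring. Qed.

End Core.

Theorem lemma4 (v1 v2 : R) (m : nat) (alpha b : R) (p q : nat -> R) :
  v2 <= v1 -> 0 < v2 -> (1 <= m)%nat -> 0 < alpha < 1 -> 0 < b <= INR m ->
  mean p = INR m + alpha -> mean q = b ->
  allpay_NE v1 v2 p q ->
  INR m * (INR m + 1) / b = v1 / 2 /\
  lotto_NE (INR m + alpha) b p q /\
  (forall n, q n = (1 - b / INR m) * delta 0 n + (b / INR m) * UE m n).
Proof.
  intros Hv Hv2 Hm Hal Hb Hmp Hmq NE.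
  pose proof (b_val v1 v2 m alpha b p q Hv Hv2 Hm Hal Hb Hmp Hmq NE) as Bv.
  pose proof (q0_val v1 v2 m alpha b p q Hv Hv2 Hm Hal Hb Hmp Hmq NE) as Q0.
  pose proof (q_odd_zero v1 v2 m alpha b p q Hv Hv2 Hm Hal Hb Hmp Hmq NE) as QO.
  pose proof (q_even_val v1 v2 m alpha b p q Hv Hv2 Hm Hal Hb Hmp Hmq NE) as QE.
  pose proof (q_zero_beyond v1 v2 m alpha b p q Hv Hv2 Hm Hal Hb Hmp Hmq NE) as QZ.
  assert (v1pos : 0 < v1) by lra.
  pose proof (Im1 m Hm) as Hm1.
  assert (E1 : INR (m + 1) = INR m + 1) by (rewrite plus_INR; simpl; ring).
  split; [|split].
  - rewrite Bv. field. split; lra.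
  - apply (lotto_part v1 v2); auto.
  - intros n. unfold delta, UE. rewrite E1. destruct (parity n) as [j [Hn|Hn]]; subst n.
    + destruct j.
      * simpl. rewrite Q0, Bv. field. split; lra.
      * replace (Nat.eqb (2 * S j) 0) with false by (symmetry; apply Nat.eqb_neq; lia).
        rewrite ev2. destruct (Nat.leb_spec (2 * S j) (2*m)).
        -- replace (2 * S j)%nat with (2*j+2)%nat by lia. rewrite QE by lia. simpl. rewrite Bv. field. split; lra.
        -- simpl. rewrite QZ by lia. ring.
    + replace (Nat.eqb (2 * j + 1) 0) with false by (symmetry; apply Nat.eqb_neq; lia).
      rewrite ev21. destruct (Compare_dec.le_lt_dec j m).
      * rewrite QO by lia. simpl. ring.
      * rewrite QZ by lia. simpl. ring.
Qed.
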